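(* Let $\gamma$ be a consistent family of grafts for a tree $\mathcal T$ and $\mathcal H=\mathrm{hybr}(\mathcal T,\gamma)$ (a tree). Then: (a) for each node $x$ of $\mathcal H$: $\mathrm{sons}_{\mathcal H}(x)=\mathrm{sons}_{\mathcal G}(x)$ if $x\in\{0_{\mathcal G}\}\cup\mathrm{impl}\,\mathcal G$ for some $\mathcal G\in\gamma$, and $\mathrm{sons}_{\mathcal H}(x)=\mathrm{sons}_{\mathcal T}(x)$ otherwise (i.e. when $x\in\mathrm{supp}(\mathcal T,\gamma)\setminus\{0_{\mathcal G}:\mathcal G\in\gamma\}$); (b) if $x\parallel_{\mathcal H}y$, then there are $x'\le_{\mathcal H}x$ and $y'\le_{\mathcal H}y$ such that either $x',y'\in\mathrm{supp}(\mathcal T,\gamma)$ and $x'\parallel_{\mathcal T}y'$, or for some $\mathcal G\in\gamma$, $x',y'\in\mathrm{nodes}\,\mathcal G$ and $x'\parallel_{\mathcal G}y'$; (c) if $\mathcal T$ has a least node, then $\mathcal H$ has a least node, $0_{\mathcal H}=0_{\mathcal T}$, and $0_{\mathcal H}\in\mathrm{supp}(\mathcal T,\gamma)$; (d) if $\max\mathcal T=\emptyset$ then $\max\mathcal H=\emptyset$; (e) if $\mathcal T$ and every $\mathcal G\in\gamma$ are $\kappa$-branching, then $\mathcal H$ is $\kappa$-branching; (f) if $\mathrm{height}\,\mathcal T\le\omega$ and $\mathrm{height}\,\mathcal G\le\omega$ for all $\mathcal G\in\gamma$, then $\mathrm{height}\,\mathcal H\le\omega$.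
   Context: A tree is a pair $\mathcal T=(Q,<_{\mathcal T})$ with $<_{\mathcal T}$ irreflexive transitive such that each set $\{v:v<_{\mathcal T}x\}$ is well-ordered; $x\parallel_{\mathcal T}y$ means $x,y$ incomparable; $\mathrm{sons}_{\mathcal T}(x)=\{s:x<_{\mathcal T}s$, no $v$ with $x<_{\mathcal T}v<_{\mathcal T}s\}$; $\max\mathcal T$ = maximal nodes; $0_{\mathcal T}$ = least node; $\kappa$-branching: every non-maximal node has exactly $\kappa$ sons; height of a node = order type of its predecessors, height of the tree = least $\beta$ such that no node has height $\beta$; $A{\downarrow}_{\mathcal T}=\{v:\exists a\in A\ a\le_{\mathcal T}v\}$; for an antichain $A$ and $x\in A{\downarrow}_{\mathcal T}$, $\mathrm{root}_{\mathcal T}(x,A)$ is the unique $r\in A$ with $r\le_{\mathcal T}x$. A graft for $\mathcal T$ is a tree $\mathcal G$ with more than one node, with a least node $0_{\mathcal G}\in\mathrm{nodes}\,\mathcal T$, such that $\max\mathcal G\subseteq\{v\in\mathrm{nodes}\,\mathcal T:v>_{\mathcal T}0_{\mathcal G}\}$, $\max\mathcal G$ is an antichain in $\mathcal T$, and $\mathrm{impl}\,\mathcal G:=\mathrm{nodes}\,\mathcal G\setminus(\{0_{\mathcal G}\}\cup\max\mathcal G)$ is disjoint from $\mathrm{nodes}\,\mathcal T$. $\mathrm{expl}(\mathcal T,\mathcal G)=\{v:v>_{\mathcal T}0_{\mathcal G}\}\setminus(\max\mathcal G){\downarrow}_{\mathcal T}$. $\gamma$ is a consistent family of grafts for $\mathcal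 T$ if its members are grafts for $\mathcal T$ with pairwise disjoint implants and for distinct $\mathcal D,\mathcal E\in\gamma$: $0_{\mathcal D}\parallel_{\mathcal T}0_{\mathcal E}$, or $0_{\mathcal D}\in(\max\mathcal E){\downarrow}_{\mathcal T}$, or $0_{\mathcal E}\in(\max\mathcal D){\downarrow}_{\mathcal T}$. $\mathrm{supp}(\mathcal T,\gamma)=\mathrm{nodes}\,\mathcal T\setminus\bigcup_{\mathcal G\in\gamma}\mathrm{expl}(\mathcal T,\mathcal G)$. $\mathrm{hybr}(\mathcal T,\gamma)=(H,<)$ with $H=\mathrm{supp}(\mathcal T,\gamma)\cup\bigcup_{\mathcal G\in\gamma}\mathrm{impl}\,\mathcal G$ and $x<y$ iff: (b1) $x,y\in\mathrm{supp}$, $x<_{\mathcal T}y$; or (b2) $x,y\in\mathrm{impl}\,\mathcal G$, $x<_{\mathcal G}y$ for some $\mathcal G\in\gamma$; or (b3) $x\in\mathrm{supp}$, $y\in\mathrm{impl}\,\mathcal G$, $x\le_{\mathcal T}0_{\mathcal G}$ for some $\mathcal G$; or (b4) $x\in\mathrm{impl}\,\mathcal G$, $y\in\mathrm{supp}\cap(\max\mathcal G){\downarrow}_{\mathcal T}$, $x<_{\mathcal G}\mathrm{root}_{\mathcal T}(y,\max\mathcal G)$ for some $\mathcal G$; or (b5) $x\in\mathrm{impl}\,\mathcal D$, $y\in\mathrm{impl}\,\mathcal E$, $0_{\mathcal E}\in(\max\mathcal D){\downarrow}_{\mathcal T}$, $x<_{\mathcal D}\mathrm{root}_{\mathcal T}(0_{\mathcal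 E},\max\mathcal D)$ for some distinct $\mathcal D,\mathcal E\in\gamma$. This $\mathrm{hybr}(\mathcal T,\gamma)$ is a tree. *)

(* Defs.v *)
From Stdlib Require Import List.

Set Implicit Arguments.

Record tree (U : Type) := Tree { nodes : U -> Prop; tlt : U -> U -> Prop }.
Arguments Tree {U}.
Arguments nodes {U}.
Arguments tlt {U}.

Section Trees.
Variable U : Type.
Implicit Types (T : tree U) (x y v s r m : U) (A : U -> Prop).

Definition tle T x y : Prop := x = y \/ tlt T x y.

Definition well_ordered_on (A : U -> Prop) (R : U -> U -> Prop) : Prop :=
  (forall a b, A a -> A b -> a = b \/ R a b \/ R b a) /\
  (forall S : U -> Prop, (forall s, S s -> A s) -> (exists s, S s) ->
     exists m, S m /\ forall s, S s -> s <> m -> R m s).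

Definition is_tree T : Prop :=
  (forall x y, tlt T x y -> nodes T x /\ nodes T y) /\
  (forall x, nodes T x -> ~ tlt T x x) /\
  (forall x y z, tlt T x y -> tlt T y z -> tlt T x z) /\
  (forall x, nodes T x -> well_ordered_on (fun v => tlt T v x) (tlt T)).

Definition incomp T x y : Prop :=
  nodes T x /\ nodes T y /\ ~ tle T x y /\ ~ tle T y x.

Definition sons T x s : Prop :=
  tlt T x s /\ ~ (exists v, tlt T x v /\ tlt T v s).

Definition maxnode T m : Prop := nodes T m /\ ~ (exists v, tlt T m v).

Definition is_least T r : Prop :=
  nodes T r /\ forall v, nodes T v -> v <> r -> tlt T r v.

Definition down T A v : Prop := nodes T v /\ exists a, A a /\ tle T a v.

Definition antichain T A : Prop :=
  (forall a, A a -> nodes T a) /\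
  (forall a b, A a -> A b -> a <> b -> incomp T a b).

Definition is_root T x A r : Prop := A r /\ tle T r x.

(* κ-branching, κ represented by a type K: every non-maximal node has
   exactly |K| sons (a bijection K -> sons). *)
Definition branching T (K : Type) : Prop :=
  forall x, nodes T x -> ~ maxnode T x ->
    exists f : K -> U, (forall k1 k2, f k1 = f k2 -> k1 = k2) /\
      (forall s, sons T x s <-> exists k, f k = s).

(* height T <= ω  iff  every node has finite height, i.e. finitely many
   predecessors *)
Definition height_le_omega T : Prop :=
  forall x, nodes T x -> exists l : list U, forall v, tlt T v x -> In v l.

End Trees.

(* Grafts carry their least node 0_G explicitly. *)
Record graft (U : Type) := Graft { gtree : tree U; gzero : U }.
Arguments Graft {U}.
Arguments gtree {U}.
Arguments gzero {U}.

Section Grafts.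
Variable U : Type.
Implicit Types (T : tree U) (G D E : graft U) (x y v : U) (gamma : graft U -> Prop).

Definition impl G v : Prop :=
  nodes (gtree G) v /\ v <> gzero G /\ ~ maxnode (gtree G) v.

Definition is_graft T G : Prop :=
  is_tree (gtree G) /\
  (exists a b, nodes (gtree G) a /\ nodes (gtree G) b /\ a <> b) /\
  is_least (gtree G) (gzero G) /\
  nodes T (gzero G) /\
  (forall m, maxnode (gtree G) m -> nodes T m /\ tlt T (gzero G) m) /\
  antichain T (maxnode (gtree G)) /\
  (forall v, impl G v -> ~ nodes T v).

Definition expl T G v : Prop :=
  nodes T v /\ tlt T (gzero G) v /\ ~ down T (maxnode (gtree G)) v.

Definition consistent T gamma : Prop :=
  (forall G, gamma G -> is_graft T G) /\
  (forall D E, gamma D -> gamma E -> D <> E -> forall v, impl D v -> ~ impl E v) /\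
  (forall D E, gamma D -> gamma E -> D <> E ->
     incomp T (gzero D) (gzero E) \/
     down T (maxnode (gtree E)) (gzero D) \/
     down T (maxnode (gtree D)) (gzero E)).

Definition supp T gamma v : Prop :=
  nodes T v /\ forall G, gamma G -> ~ expl T G v.

Definition hybr_nodes T gamma v : Prop :=
  supp T gamma v \/ exists G, gamma G /\ impl G v.

Definition hybr_lt T gamma x y : Prop :=
  (supp T gamma x /\ supp T gamma y /\ tlt T x y) \/
  (exists G, gamma G /\ impl G x /\ impl G y /\ tlt (gtree G) x y) \/
  (exists G, gamma G /\ supp T gamma x /\ impl G y /\ tle T x (gzero G)) \/
  (exists G, gamma G /\ impl G x /\ supp T gamma y /\
     down T (maxnode (gtree G)) y /\
     exists r, is_root T y (maxnode (gtree G)) r /\ tlt (gtree G) x r) \/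
  (exists D E, gamma D /\ gamma E /\ D <> E /\ impl D x /\ impl E y /\
     down T (maxnode (gtree D)) (gzero E) /\
     exists r, is_root T (gzero E) (maxnode (gtree D)) r /\ tlt (gtree D) x r).

Definition hybr T gamma : tree U := Tree (hybr_nodes T gamma) (hybr_lt T gamma).

End Grafts.

(* Main.v *)
Require Import Defs.
From Stdlib Require Import List Classical.
Set Implicit Arguments.

Section TreeFacts.
Variable U : Type.

Lemma t_nodes {T0 : tree U} (h : is_tree T0) {x y} : tlt T0 x y -> nodes T0 x /\ nodes T0 y.
Proof. intros H; exact (proj1 h x y H). Qed.
Lemma t_irr {T0 : tree U} (h : is_tree T0) {x} : tlt T0 x x -> False.
Proof. intros H. destruct h as [h1 [h2 _]]. exact (h2 x (proj1 (h1 _ _ H)) H). Qed.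
Lemma t_trans {T0 : tree U} (h : is_tree T0) {x y z} : tlt T0 x y -> tlt T0 y z -> tlt T0 x z.
Proof. destruct h as [_ [_ [h3 _]]]. eauto. Qed.
Lemma t_cmp {T0 : tree U} (h : is_tree T0) {a b x} : tlt T0 a x -> tlt T0 b x ->
  a = b \/ tlt T0 a b \/ tlt T0 b a.
Proof. intros Ha Hb. destruct h as [h1 [_ [_ h4]]].
  destruct (h4 x (proj2 (h1 _ _ Ha))) as [tot _]. apply tot; assumption. Qed.
Lemma t_cmp_le {T0 : tree U} (h : is_tree T0) {a b x} : tle T0 a x -> tle T0 b x ->
  a = b \/ tlt T0 a b \/ tlt T0 b a.
Proof. intros [->|Ha] [->|Hb]; auto. eapply t_cmp; eauto. Qed.
Lemma t_le_lt {T0 : tree U} (h : is_tree T0) {a b c} : tle T0 a b -> tlt T0 b c -> tlt T0 a c.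
Proof. intros [->|H1] H2; [exact H2| eapply t_trans; eauto]. Qed.
Lemma t_lt_le {T0 : tree U} (h : is_tree T0) {a b c} : tlt T0 a b -> tle T0 b c -> tlt T0 a c.
Proof. intros H1 [<-|H2]; [exact H1| eapply t_trans; eauto]. Qed.
Lemma t_le_trans {T0 : tree U} (h : is_tree T0) {a b c} : tle T0 a b -> tle T0 b c -> tle T0 a c.
Proof. intros [->|H1] H2; [exact H2| right; eapply t_lt_le; eauto]. Qed.
Lemma t_cyc {T0 : tree U} (h : is_tree T0) {a b} : tlt T0 a b -> tle T0 b a -> False.
Proof. intros H1 H2. eapply t_irr; [exact h| eapply t_lt_le; eauto]. Qed.
Lemma t_asym {T0 : tree U} (h : is_tree T0) {a b} : tlt T0 a b -> tlt T0 b a -> False.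
Proof. intros H1 H2. eapply t_cyc; [exact h | exact H1 | right; exact H2]. Qed.
End TreeFacts.
Section Hyb.
Variable U : Type.
Variable T : tree U.
Variable gamma : graft U -> Prop.
Hypothesis hT : is_tree T.
Hypothesis hg : consistent T gamma.
Implicit Types (G D E : graft U) (x y v m r s w a : U).

Local Notation mx G := (maxnode (gtree G)).
Local Notation HL := (hybr_lt T gamma).
Local Notation HN := (hybr_nodes T gamma).
Local Notation sp := (supp T gamma).

Lemma g_graft {G} : gamma G -> is_graft T G.
Proof. intro H; apply (proj1 hg); auto. Qed.
Lemma g_tree {G} : gamma G -> is_tree (gtree G).
Proof. intro H; exact (proj1 (g_graft H)). Qed.
Lemma g_zero_T {G} : gamma G -> nodes T (gzero G).
Proof. intro H; destruct (g_graft H) as (h1 & h2 & h3 & h4 & h5 & h6 & h7); auto. Qed.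
Lemma g_least {G v} : gamma G -> nodes (gtree G) v -> v <> gzero G -> tlt (gtree G) (gzero G) v.
Proof. intro H; destruct (g_graft H) as (h1 & h2 & h3 & h4 & h5 & h6 & h7). apply h3. Qed.
Lemma g_max_T {G m} : gamma G -> mx G m -> nodes T m /\ tlt T (gzero G) m.
Proof. intro H; destruct (g_graft H) as (h1 & h2 & h3 & h4 & h5 & h6 & h7). apply h5. Qed.
Lemma g_anti {G m1 m2} : gamma G -> mx G m1 -> mx G m2 -> tle T m1 m2 -> m1 = m2.
Proof. intros H H1 H2 Hle; destruct (g_graft H) as (h1 & h2 & h3 & h4 & h5 & h6 & h7).
  destruct (classic (m1 = m2)) as [e|n]; auto.
  destruct (proj2 h6 m1 m2 H1 H2 n) as (_ & _ & n1 & _). contradiction. Qed.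
Lemma g_impl_notT {G v} : gamma G -> impl G v -> nodes T v -> False.
Proof. intro H; destruct (g_graft H) as (h1 & h2 & h3 & h4 & h5 & h6 & h7). apply h7. Qed.
Lemma g_other {G} : gamma G -> exists w, nodes (gtree G) w /\ w <> gzero G.
Proof. intro H; destruct (g_graft H) as (h1 & (a & b & Ha & Hb & Hab) & h3 & h4 & h5 & h6 & h7).
  destruct (classic (a = gzero G)) as [->|n]; eauto. Qed.
Lemma g_class {G v} : nodes (gtree G) v -> v = gzero G \/ impl G v \/ mx G v.
Proof. intro Hv. destruct (classic (v = gzero G)); destruct (classic (mx G v)); unfold impl; tauto. Qed.
Lemma g_zero_not_max {G} : gamma G -> mx G (gzero G) -> False.
Proof. intros H [_ Hm]. destruct (g_other H) as (w & Hw & Hne). apply Hm. exists w. apply g_least; auto. Qed.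
Lemma impl_zero {G v} : gamma G -> impl G v -> tlt (gtree G) (gzero G) v.
Proof. intros H (Hn & Hne & _). apply g_least; auto. Qed.
Lemma max_zero_G {G m} : gamma G -> mx G m -> tlt (gtree G) (gzero G) m.
Proof. intros H Hm. apply g_least; auto. apply Hm. intros ->. exact (g_zero_not_max H Hm). Qed.
Lemma max_no_succ {G m v} : mx G m -> tlt (gtree G) m v -> False.
Proof. intros [_ Hm] H. apply Hm; eauto. Qed.

Lemma root_unique {G y r1 r2} : gamma G -> is_root T y (mx G) r1 -> is_root T y (mx G) r2 -> r1 = r2.
Proof. intros H [H1 L1] [H2 L2]. destruct (t_cmp_le hT L1 L2) as [e|[l|l]]; auto.
  - apply (g_anti H H1 H2). right; exact l.
  - symmetry. apply (g_anti H H2 H1). right; exact l. Qed.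
Lemma root_self {G m} : mx G m -> is_root T m (mx G) m.
Proof. intros H; split; [exact H| left; reflexivity]. Qed.
Lemma root_of_max {G m r} : gamma G -> mx G m -> is_root T m (mx G) r -> r = m.
Proof. intros H Hm Hr. exact (root_unique H Hr (root_self Hm)). Qed.
Lemma down_root {G y} : down T (mx G) y -> exists r, is_root T y (mx G) r.
Proof. intros [_ [a [Ha Hle]]]. exists a; split; auto. Qed.
Lemma root_down {G y r} : nodes T y -> is_root T y (mx G) r -> down T (mx G) y.
Proof. intros Hy [Hr Hle]. split; eauto. Qed.
Lemma root_gt_zero {G y r} : gamma G -> is_root T y (mx G) r -> tlt T (gzero G) r.
Proof. intros H [Hr _]. exact (proj2 (g_max_T H Hr)). Qed.

Lemma cons3 {D E} : gamma D -> gamma E -> D <> E ->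
  incomp T (gzero D) (gzero E) \/ down T (mx E) (gzero D) \/ down T (mx D) (gzero E).
Proof. intros; apply (proj2 (proj2 hg)); auto. Qed.
Lemma impl_unique {D E v} : gamma D -> gamma E -> impl D v -> impl E v -> D = E.
Proof. intros HD HE H1 H2. destruct (classic (D = E)) as [e|n]; auto.
  exfalso. exact (proj1 (proj2 hg) D E HD HE n v H1 H2). Qed.

Lemma zero_inj {D E} : gamma D -> gamma E -> gzero D = gzero E -> D = E.
Proof. intros HD HE Hz. destruct (classic (D = E)) as [e|n]; auto. exfalso.
  destruct (cons3 HD HE n) as [(_ & _ & n1 & _)|[[_ [a [Ha Hle]]]|[_ [a [Ha Hle]]]]].
  - apply n1; left; exact Hz.
  - rewrite Hz in Hle. exact (t_cyc hT (proj2 (g_max_T HE Ha)) Hle).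
  - rewrite <- Hz in Hle. exact (t_cyc hT (proj2 (g_max_T HD Ha)) Hle). Qed.

Lemma supp_nodes {v} : sp v -> nodes T v.
Proof. intros [H _]; exact H. Qed.
Lemma supp_not_impl {G v} : gamma G -> sp v -> impl G v -> False.
Proof. intros H Hs Hi. exact (g_impl_notT H Hi (supp_nodes Hs)). Qed.

Lemma zero_supp {G} : gamma G -> sp (gzero G).
Proof. intro HG. split; [exact (g_zero_T HG)|]. intros D HD [Hn [Hlt Hnd]].
  destruct (classic (D = G)) as [->|Hne]; [exact (t_irr hT Hlt)|].
  destruct (cons3 HD HG Hne) as [(_ & _ & n1 & _)|[[_ [a [Ha Hle]]]|Hdn]].
  - apply n1; right; exact Hlt.
  - pose proof (proj2 (g_max_T HG Ha)) as Ha0.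
    exact (t_asym hT (t_lt_le hT Ha0 Hle) Hlt).
  - exact (Hnd Hdn). Qed.

Lemma supp_above {G y} : gamma G -> sp y -> tlt T (gzero G) y -> down T (mx G) y.
Proof. intros HG [Hn Hs] Hlt. apply NNPP; intro Hnd. apply (Hs G HG). split; auto. Qed.

Lemma max_supp {G m} : gamma G -> mx G m -> sp m.
Proof. intros HG Hm. destruct (g_max_T HG Hm) as [Hmn Hm0].
  split; [exact Hmn|]. intros D HD [Hn [Hlt Hnd]].
  destruct (classic (D = G)) as [->|Hne].
  - apply Hnd. split; [exact Hmn| exists m; split; [exact Hm| left; reflexivity]].
  - destruct (cons3 HD HG Hne) as [(_ & _ & n1 & n2)|[[_ [a [Ha Hle]]]|[_ [a [Ha Hle]]]]].
    + destruct (t_cmp hT Hlt Hm0) as [e|[l|l]].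
      * apply n1; left; exact e.
      * apply n1; right; exact l.
      * apply n2; right; exact l.
    + assert (Ham : a = m) by (apply (g_anti HG Ha Hm); right; exact (t_le_lt hT Hle Hlt)).
      subst a. exact (t_cyc hT Hlt Hle).
    + apply Hnd. split; [exact Hmn| exists a; split; [exact Ha| right; exact (t_le_lt hT Hle Hm0)]].
Qed.

Ltac sni := exfalso; match goal with H: gamma ?G, Hs : supp T gamma ?v, Hi : impl ?G ?v |- _ => exact (supp_not_impl H Hs Hi) end.

Lemma HL_nodes {x y} : HL x y -> HN x /\ HN y.
Proof. unfold hybr_lt, hybr_nodes.
  intros [(H1&H2&_)|[(G&HG&H1&H2&_)|[(G&HG&H1&H2&_)|[(G&HG&H1&H2&_)|(D&E&HD&HE&_&H1&H2&_)]]]];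
  split; solve [left; exact H1 | left; exact H2 | right; eauto]. Qed.

Lemma HL_ss {x y} : sp x -> sp y -> (HL x y <-> tlt T x y).
Proof. intros Hx Hy. split.
  - unfold hybr_lt.
    intros [(_&_&H)|[(G&HG&H1&_)|[(G&HG&_&H1&_)|[(G&HG&H1&_)|(D&E&HD&HE&_&H1&_)]]]];
    [exact H| sni ..].
  - intro; left; auto. Qed.

Lemma HL_si {G x y} : gamma G -> sp x -> impl G y -> (HL x y <-> tle T x (gzero G)).
Proof. intros HG Hx Hy. split.
  - unfold hybr_lt.
    intros [(_&H1&_)|[(G'&HG'&H1&_)|[(G'&HG'&_&H1&H)|[(G'&HG'&H1&_)|(D&E&HD&HE&_&H1&_)]]]];
    try sni.
    rewrite (impl_unique HG HG' Hy H1). exact H.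
  - intro; right; right; left; exists G; auto. Qed.

Lemma HL_is {G x y} : gamma G -> impl G x -> sp y ->
  (HL x y <-> exists r, is_root T y (mx G) r /\ tlt (gtree G) x r).
Proof. intros HG Hx Hy. split.
  - unfold hybr_lt.
    intros [(H1&_)|[(G'&HG'&_&H1&_)|[(G'&HG'&H1&_)|[(G'&HG'&H1&_&_&H)|(D&E&HD&HE&_&_&H1&_)]]]];
    try sni.
    rewrite (impl_unique HG HG' Hx H1). exact H.
  - intros [r [Hr Hlt]]. right; right; right; left. exists G.
    split; [exact HG|]. split; [exact Hx|]. split; [exact Hy|].
    split; [exact (root_down (supp_nodes Hy) Hr)| exists r; split; auto]. Qed.

Lemma HL_ii {G x y} : gamma G -> impl G x -> impl G y -> (HL x y <-> tlt (gtree G) x y).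
Proof. intros HG Hx Hy. split.
  - unfold hybr_lt.
    intros [(H1&_)|[(G'&HG'&H1&H2&H)|[(G'&HG'&H1&_)|[(G'&HG'&_&H1&_)|(D&E&HD&HE&Hne&H1&H2&_)]]]];
    try sni.
    + rewrite (impl_unique HG HG' Hx H1). exact H.
    + exfalso. apply Hne. rewrite <- (impl_unique HG HD Hx H1). exact (impl_unique HG HE Hy H2).
  - intro; right; left; exists G; auto. Qed.

Lemma HL_iid {D E x y} : gamma D -> gamma E -> D <> E -> impl D x -> impl E y ->
  (HL x y <-> exists r, is_root T (gzero E) (mx D) r /\ tlt (gtree D) x r).
Proof. intros HD HE Hne Hx Hy. split.
  - unfold hybr_lt.
    intros [(H1&_)|[(G'&HG'&H1&H2&H)|[(G'&HG'&H1&_)|[(G'&HG'&_&H1&_)|(D'&E'&HD'&HE'&Hne'&H1&H2&_&H)]]]];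
    try sni.
    + exfalso. apply Hne. rewrite (impl_unique HD HG' Hx H1). exact (impl_unique HG' HE H2 Hy).
    + rewrite (impl_unique HD HD' Hx H1), (impl_unique HE HE' Hy H2). exact H.
  - intros [r [Hr Hlt]]. right; right; right; right. exists D, E.
    do 3 (split; [assumption|]). split; [exact Hx|]. split; [exact Hy|].
    split; [exact (root_down (g_zero_T HE) Hr)| exists r; split; auto]. Qed.

Lemma HN_cases {v} : HN v -> sp v \/ exists G, gamma G /\ impl G v.
Proof. intro H; exact H. Qed.

Lemma a1_impl {G x s} : gamma G -> impl G x ->
  (sons (hybr T gamma) x s <-> sons (gtree G) x s).
Proof.
  intros HG Hx. pose proof (g_tree HG) as hG. unfold sons; cbn [tlt hybr].
  split.
  - intros [Hxs Hnb].
    destruct (HN_cases (proj2 (HL_nodes Hxs))) as [Hs|[E [HE Hs]]].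
    + destruct (proj1 (HL_is HG Hx Hs) Hxs) as [r [Hr Hxr]].
      assert (Hrs : r = s).
      { destruct Hr as [Hrm [Heq|Hlt]]; [exact Heq|]. exfalso. apply Hnb. exists r. split.
        - apply (proj2 (HL_is HG Hx (max_supp HG Hrm))). exists r; split; [apply root_self; exact Hrm| exact Hxr].
        - apply (proj2 (HL_ss (max_supp HG Hrm) Hs)). exact Hlt. }
      subst r. split; [exact Hxr|]. intros [v [Hxv Hvs]].
      destruct (g_class (proj2 (t_nodes hG Hxv))) as [Hv0|[Hv|Hvm]].
      * subst v. exact (t_asym hG (impl_zero HG Hx) Hxv).
      * apply Hnb. exists v. split. apply (proj2 (HL_ii HG Hx Hv)); exact Hxv.
        apply (proj2 (HL_is HG Hv Hs)). exists s. split; [apply root_self; exact (proj1 Hr)| exact Hvs].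
      * exact (max_no_succ Hvm Hvs).
    + destruct (classic (E = G)) as [->|HEG].
      * pose proof (proj1 (HL_ii HG Hx Hs) Hxs) as Hxs'. split; [exact Hxs'|].
        intros [v [Hxv Hvs]]. destruct (g_class (proj2 (t_nodes hG Hxv))) as [Hv0|[Hv|Hvm]].
        -- subst v. exact (t_asym hG (impl_zero HG Hx) Hxv).
        -- apply Hnb. exists v. split; [apply (proj2 (HL_ii HG Hx Hv)); exact Hxv| apply (proj2 (HL_ii HG Hv Hs)); exact Hvs].
        -- exact (max_no_succ Hvm Hvs).
      * exfalso. destruct (proj1 (HL_iid HG HE (not_eq_sym HEG) Hx Hs) Hxs) as [r [Hr Hxr]].
        apply Hnb. exists r. split.
        -- apply (proj2 (HL_is HG Hx (max_supp HG (proj1 Hr)))). exists r. split; [apply root_self; exact (proj1 Hr)|exact Hxr].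
        -- apply (proj2 (HL_si HE (max_supp HG (proj1 Hr)) Hs)). exact (proj2 Hr).
  - intros [Hxs Hnb].
    assert (Hs : nodes (gtree G) s) by exact (proj2 (t_nodes hG Hxs)).
    destruct (g_class Hs) as [Hs0|[Hsi|Hsm]].
    + subst s. exfalso. exact (t_asym hG (impl_zero HG Hx) Hxs).
    + split. apply (proj2 (HL_ii HG Hx Hsi)); exact Hxs.
      intros [v [Hxv Hvs]].
      destruct (HN_cases (proj2 (HL_nodes Hxv))) as [Hv|[E [HE Hv]]].
      * pose proof (proj1 (HL_si HG Hv Hsi) Hvs) as Hle.
        destruct (proj1 (HL_is HG Hx Hv) Hxv) as [r [Hr _]].
        exact (t_cyc hT (root_gt_zero HG Hr) (t_le_trans hT (proj2 Hr) Hle)).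
      * destruct (classic (E = G)) as [->|HEG].
        -- apply Hnb. exists v. split; [exact (proj1 (HL_ii HG Hx Hv) Hxv)| exact (proj1 (HL_ii HG Hv Hsi) Hvs)].
        -- destruct (proj1 (HL_iid HG HE (not_eq_sym HEG) Hx Hv) Hxv) as [r1 [Hr1 _]].
           destruct (proj1 (HL_iid HE HG HEG Hv Hsi) Hvs) as [r2 [Hr2 _]].
           pose proof (t_lt_le hT (root_gt_zero HG Hr1) (proj2 Hr1)) as L1.
           pose proof (t_lt_le hT (root_gt_zero HE Hr2) (proj2 Hr2)) as L2.
           exact (t_asym hT L1 L2).
    + pose proof (max_supp HG Hsm) as Hss. split.
      apply (proj2 (HL_is HG Hx Hss)). exists s; split; [apply root_self; exact Hsm| exact Hxs].
      intros [v [Hxv Hvs]].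
      destruct (HN_cases (proj2 (HL_nodes Hxv))) as [Hv|[E [HE Hv]]].
      * destruct (proj1 (HL_is HG Hx Hv) Hxv) as [r [Hr _]].
        pose proof (proj1 (HL_ss Hv Hss) Hvs) as Lvs.
        assert (r = s) by (apply (g_anti HG (proj1 Hr) Hsm); right; exact (t_le_lt hT (proj2 Hr) Lvs)).
        subst r. exact (t_cyc hT Lvs (proj2 Hr)).
      * destruct (classic (E = G)) as [->|HEG].
        -- destruct (proj1 (HL_is HG Hv Hss) Hvs) as [r [Hr Hvr]].
           rewrite (root_of_max HG Hsm Hr) in Hvr.
           apply Hnb. exists v. split; [exact (proj1 (HL_ii HG Hx Hv) Hxv)| exact Hvr].
        -- destruct (proj1 (HL_iid HG HE (not_eq_sym HEG) Hx Hv) Hxv) as [r1 [Hr1 _]].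
           destruct (proj1 (HL_is HE Hv Hss) Hvs) as [r3 [Hr3 _]].
           pose proof (t_lt_le hT (t_le_lt hT (proj2 Hr1) (root_gt_zero HE Hr3)) (proj2 Hr3)) as L.
           assert (r1 = s) by (apply (g_anti HG (proj1 Hr1) Hsm); right; exact L).
           subst r1. exact (t_irr hT L).
Qed.

Lemma a1_zero {G s} : gamma G ->
  (sons (hybr T gamma) (gzero G) s <-> sons (gtree G) (gzero G) s).
Proof.
  intros HG. pose proof (g_tree HG) as hG. pose proof (zero_supp HG) as z.
  unfold sons; cbn [tlt hybr].
  split.
  - intros [Hxs Hnb].
    destruct (HN_cases (proj2 (HL_nodes Hxs))) as [Hs|[E [HE Hs]]].
    + pose proof (proj1 (HL_ss z Hs) Hxs) as L.
      destruct (down_root (supp_above HG Hs L)) as [r Hr].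
      assert (Hrs : r = s).
      { destruct Hr as [Hrm [Heq|Hlt]]; [exact Heq|]. exfalso. apply Hnb. exists r. split.
        - apply (proj2 (HL_ss z (max_supp HG Hrm))). exact (proj2 (g_max_T HG Hrm)).
        - apply (proj2 (HL_ss (max_supp HG Hrm) Hs)). exact Hlt. }
      subst r. pose proof (proj1 Hr) as Hsm. split; [exact (max_zero_G HG Hsm)|]. intros [v [Hxv Hvs]].
      destruct (g_class (proj2 (t_nodes hG Hxv))) as [Hv0|[Hv|Hvm]].
      * subst v. exact (t_irr hG Hxv).
      * apply Hnb. exists v. split. apply (proj2 (HL_si HG z Hv)); left; reflexivity.
        apply (proj2 (HL_is HG Hv Hs)). exists s. split; [apply root_self; exact Hsm| exact Hvs].
      * exact (max_no_succ Hvm Hvs).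
    + pose proof (proj1 (HL_si HE z Hs) Hxs) as Hle.
      destruct Hle as [e|Hlt].
      * pose proof (zero_inj HG HE e) as e'. subst E.
        split; [exact (impl_zero HG Hs)|].
        intros [v [Hxv Hvs]]. destruct (g_class (proj2 (t_nodes hG Hxv))) as [Hv0|[Hv|Hvm]].
        -- subst v. exact (t_irr hG Hxv).
        -- apply Hnb. exists v. split; [apply (proj2 (HL_si HG z Hv)); left; reflexivity| apply (proj2 (HL_ii HG Hv Hs)); exact Hvs].
        -- exact (max_no_succ Hvm Hvs).
      * exfalso. apply Hnb. exists (gzero E). split.
        -- apply (proj2 (HL_ss z (zero_supp HE))). exact Hlt.
        -- apply (proj2 (HL_si HE (zero_supp HE) Hs)). left; reflexivity.
  - intros [Hxs Hnb].
    assert (Hs : nodes (gtree G) s) by exact (proj2 (t_nodes hG Hxs)).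
    destruct (g_class Hs) as [Hs0|[Hsi|Hsm]].
    + subst s. exfalso. exact (t_irr hG Hxs).
    + split. apply (proj2 (HL_si HG z Hsi)); left; reflexivity.
      intros [v [Hxv Hvs]].
      destruct (HN_cases (proj2 (HL_nodes Hxv))) as [Hv|[E [HE Hv]]].
      * exact (t_cyc hT (proj1 (HL_ss z Hv) Hxv) (proj1 (HL_si HG Hv Hsi) Hvs)).
      * destruct (classic (E = G)) as [->|HEG].
        -- apply Hnb. exists v. split; [exact (impl_zero HG Hv)| exact (proj1 (HL_ii HG Hv Hsi) Hvs)].
        -- pose proof (proj1 (HL_si HE z Hv) Hxv) as Hle.
           destruct (proj1 (HL_iid HE HG HEG Hv Hsi) Hvs) as [r [Hr _]].
           exact (t_cyc hT (t_lt_le hT (root_gt_zero HE Hr) (proj2 Hr)) Hle).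
    + pose proof (max_supp HG Hsm) as Hss. split.
      apply (proj2 (HL_ss z Hss)). exact (proj2 (g_max_T HG Hsm)).
      intros [v [Hxv Hvs]].
      destruct (HN_cases (proj2 (HL_nodes Hxv))) as [Hv|[E [HE Hv]]].
      * pose proof (proj1 (HL_ss z Hv) Hxv) as L1.
        pose proof (proj1 (HL_ss Hv Hss) Hvs) as L2.
        destruct (down_root (supp_above HG Hv L1)) as [r Hr].
        assert (r = s) by (apply (g_anti HG (proj1 Hr) Hsm); right; exact (t_le_lt hT (proj2 Hr) L2)).
        subst r. exact (t_cyc hT L2 (proj2 Hr)).
      * destruct (classic (E = G)) as [->|HEG].
        -- destruct (proj1 (HL_is HG Hv Hss) Hvs) as [r [Hr Hvr]].
           rewrite (root_of_max HG Hsm Hr) in Hvr.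
           apply Hnb. exists v. split; [exact (impl_zero HG Hv)| exact Hvr].
        -- pose proof (proj1 (HL_si HE z Hv) Hxv) as Hle.
           destruct Hle as [e|Hlt].
           ++ exact (HEG (eq_sym (zero_inj HG HE e))).
           ++ destruct (down_root (supp_above HG (zero_supp HE) Hlt)) as [m' Hm'].
              destruct (proj1 (HL_is HE Hv Hss) Hvs) as [r3 [Hr3 _]].
              pose proof (t_lt_le hT (t_le_lt hT (proj2 Hm') (root_gt_zero HE Hr3)) (proj2 Hr3)) as L.
              assert (m' = s) by (apply (g_anti HG (proj1 Hm') Hsm); right; exact L).
              subst m'. exact (t_irr hT L).
Qed.

Lemma not_supp_expl {v} : nodes T v -> ~ sp v -> exists G, gamma G /\ expl T G v.
Proof. intros Hn Hs. destruct (classic (exists G, gamma G /\ expl T G v)) as [H|Hno]; auto.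
  exfalso. apply Hs. split; auto. intros G HG He. apply Hno; eauto. Qed.

Lemma a2 {x s} : sp x -> (forall G, gamma G -> x <> gzero G) ->
  (sons (hybr T gamma) x s <-> sons T x s).
Proof.
  intros Hx Hz. unfold sons; cbn [tlt hybr]. split.
  - intros [Hxs Hnb].
    destruct (HN_cases (proj2 (HL_nodes Hxs))) as [Hs|[E [HE Hs]]].
    + pose proof (proj1 (HL_ss Hx Hs) Hxs) as L. split; [exact L|].
      intros [v [Hxv Hvs]]. pose proof (proj2 (t_nodes hT Hxv)) as Hvn.
      destruct (classic (sp v)) as [Hv|Hv].
      * apply Hnb. exists v. split; [exact (proj2 (HL_ss Hx Hv) Hxv)| exact (proj2 (HL_ss Hv Hs) Hvs)].
      * destruct (not_supp_expl Hvn Hv) as [G [HG [_ [L0v Hnd]]]].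
        pose proof (t_trans hT L0v Hvs) as L0s.
        destruct (down_root (supp_above HG Hs L0s)) as [m Hm].
        destruct (t_cmp_le hT (proj2 Hm) (or_intror Hvs : tle T v s)) as [e|[Lmv|Lvm]].
        -- apply Hnd. split; [exact Hvn| exists m; split; [exact (proj1 Hm)| left; exact e]].
        -- apply Hnd. split; [exact Hvn| exists m; split; [exact (proj1 Hm)| right; exact Lmv]].
        -- destruct (proj2 Hm) as [ems|Lms].
           ++ subst m. destruct (t_cmp hT Hxv L0v) as [e|[Lx0|L0x]].
              ** exact (Hz G HG e).
              ** apply Hnb. exists (gzero G). split; [exact (proj2 (HL_ss Hx (zero_supp HG)) Lx0)| exact (proj2 (HL_ss (zero_supp HG) Hs) L0s)].
              ** destruct (down_root (supp_above HG Hx L0x)) as [m' Hm'].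
                 pose proof (t_trans hT Hxv Lvm) as Lxs.
                 assert (m' = s) by (apply (g_anti HG (proj1 Hm') (proj1 Hm)); right; exact (t_le_lt hT (proj2 Hm') Lxs)).
                 subst m'. exact (t_cyc hT Lxs (proj2 Hm')).
           ++ apply Hnb. exists m. pose proof (max_supp HG (proj1 Hm)) as Hms. split.
              ** exact (proj2 (HL_ss Hx Hms) (t_trans hT Hxv Lvm)).
              ** exact (proj2 (HL_ss Hms Hs) Lms).
    + exfalso. destruct (proj1 (HL_si HE Hx Hs) Hxs) as [e|Lt].
      * exact (Hz E HE e).
      * apply Hnb. exists (gzero E). split; [exact (proj2 (HL_ss Hx (zero_supp HE)) Lt)|].
        apply (proj2 (HL_si HE (zero_supp HE) Hs)). left; reflexivity.
  - intros [L Hnb].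
    assert (Hs : sp s).
    { split; [exact (proj2 (t_nodes hT L))|]. intros G HG [_ [L0s Hnd]].
      destruct (t_cmp hT L L0s) as [e|[Lx0|L0x]].
      - exact (Hz G HG e).
      - apply Hnb. exists (gzero G). auto.
      - destruct (down_root (supp_above HG Hx L0x)) as [m Hm]. apply Hnd.
        split; [exact (proj2 (t_nodes hT L))| exists m; split; [exact (proj1 Hm)| right; exact (t_le_lt hT (proj2 Hm) L)]]. }
    split; [exact (proj2 (HL_ss Hx Hs) L)|].
    intros [v [Hxv Hvs]].
    destruct (HN_cases (proj2 (HL_nodes Hxv))) as [Hv|[E [HE Hv]]].
    + apply Hnb. exists v. split; [exact (proj1 (HL_ss Hx Hv) Hxv)| exact (proj1 (HL_ss Hv Hs) Hvs)].
    + destruct (proj1 (HL_si HE Hx Hv) Hxv) as [e|Lt].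
      * exact (Hz E HE e).
      * destruct (proj1 (HL_is HE Hv Hs) Hvs) as [r [Hr _]].
        apply Hnb. exists (gzero E). split; [exact Lt| exact (t_lt_le hT (root_gt_zero HE Hr) (proj2 Hr))].
Qed.

Lemma incomp_sym' {T0 : tree U} {x y} : incomp T0 x y -> incomp T0 y x.
Proof. intros (a & b & c & d); repeat split; auto. Qed.

Lemma incomp_im {G v r} : gamma G -> impl G v -> mx G r -> ~ tlt (gtree G) v r -> incomp (gtree G) v r.
Proof. intros HG Hv Hr Hn. destruct Hv as (Hvn & Hv0 & Hvm).
  split; [exact Hvn|]. split; [exact (proj1 Hr)|]. split.
  - intros [e|l]; [subst; exact (Hvm Hr)| exact (Hn l)].
  - intros [e|l]; [subst; exact (Hvm Hr)| exact (max_no_succ Hr l)]. Qed.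

Definition Bc x y := exists x' y', tle (hybr T gamma) x' x /\ tle (hybr T gamma) y' y /\
  ((sp x' /\ sp y' /\ incomp T x' y') \/
   (exists G, gamma G /\ nodes (gtree G) x' /\ nodes (gtree G) y' /\ incomp (gtree G) x' y')).

Lemma Bc_sym {x y} : Bc y x -> Bc x y.
Proof. intros (x' & y' & H1 & H2 & [(a & b & c)|(G & a & b & c & d)]); exists y', x'; split; auto; split; auto.
  - left; split; [exact b|]; split; [exact a| exact (incomp_sym' c)].
  - right; exists G; split; [exact a|]; split; [exact c|]; split; [exact b| exact (incomp_sym' d)]. Qed.

Lemma b_si {x E y} : gamma E -> sp x -> impl E y -> ~ tle (hybr T gamma) x y -> ~ tle (hybr T gamma) y x -> Bc x y.
Proof. intros HE Hx Hy Hnxy Hnyx. unfold tle in Hnxy, Hnyx; cbn [tlt hybr] in Hnxy, Hnyx.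
  destruct (classic (tle T x (gzero E))) as [Hle|Hnle].
  - exfalso. apply Hnxy. right. exact (proj2 (HL_si HE Hx Hy) Hle).
  - destruct (classic (tlt T (gzero E) x)) as [Lt|Hnlt].
    + destruct (down_root (supp_above HE Hx Lt)) as [r Hr].
      destruct (classic (tlt (gtree E) y r)) as [Lyr|Hn].
      * exfalso. apply Hnyx. right. apply (proj2 (HL_is HE Hy Hx)). eauto.
      * exists r, y. split; [|split].
        -- unfold tle; cbn [tlt hybr]. destruct (proj2 Hr) as [e|l]; [left; exact e|].
           right. exact (proj2 (HL_ss (max_supp HE (proj1 Hr)) Hx) l).
        -- left; reflexivity.
        -- right. exists E. split; [exact HE|]. split; [exact (proj1 (proj1 Hr))|]. split; [exact (proj1 Hy)|].
           apply incomp_sym'. exact (incomp_im HE Hy (proj1 Hr) Hn).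
    + exists x, (gzero E). split; [left; reflexivity|]. split.
      * unfold tle; cbn [tlt hybr]. right. apply (proj2 (HL_si HE (zero_supp HE) Hy)). left; reflexivity.
      * left. split; [exact Hx|]. split; [exact (zero_supp HE)|].
      split; [exact (supp_nodes Hx)|]. split; [exact (g_zero_T HE)|]. split; [exact Hnle|].
      intros [e|l]; [apply Hnle; left; symmetry; exact e| exact (Hnlt l)].
Qed.

Lemma b_main {x y} : incomp (hybr T gamma) x y -> Bc x y.
Proof. intros (Hxn & Hyn & Hnxy & Hnyx). cbn [nodes hybr] in Hxn, Hyn.
  destruct (HN_cases Hxn) as [Hx|[D [HD Hx]]]; destruct (HN_cases Hyn) as [Hy|[E [HE Hy]]].
  - exists x, y. split; [left; reflexivity|]. split; [left; reflexivity|]. left.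
    split; [exact Hx|]. split; [exact Hy|]. split; [exact (supp_nodes Hx)|]. split; [exact (supp_nodes Hy)|].
    unfold tle in Hnxy, Hnyx; cbn [tlt hybr] in Hnxy, Hnyx. split.
    + intros [e|l]; [apply Hnxy; left; exact e| apply Hnxy; right; exact (proj2 (HL_ss Hx Hy) l)].
    + intros [e|l]; [apply Hnyx; left; exact e| apply Hnyx; right; exact (proj2 (HL_ss Hy Hx) l)].
  - exact (b_si HE Hx Hy Hnxy Hnyx).
  - apply Bc_sym. exact (b_si HD Hy Hx Hnyx Hnxy).
  - unfold tle in Hnxy, Hnyx; cbn [tlt hybr] in Hnxy, Hnyx.
    destruct (classic (D = E)) as [<-|Hne].
    + exists x, y. split; [left; reflexivity|]. split; [left; reflexivity|]. right. exists D.
      split; [exact HD|]. split; [exact (proj1 Hx)|]. split; [exact (proj1 Hy)|].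
      split; [exact (proj1 Hx)|]. split; [exact (proj1 Hy)|]. split.
      * intros [e|l]; [apply Hnxy; left; exact e| apply Hnxy; right; exact (proj2 (HL_ii HD Hx Hy) l)].
      * intros [e|l]; [apply Hnyx; left; exact e| apply Hnyx; right; exact (proj2 (HL_ii HD Hy Hx) l)].
    + destruct (cons3 HD HE Hne) as [Hinc|[Hdn|Hdn]].
      * exists (gzero D), (gzero E). split; [|split].
        -- unfold tle; cbn [tlt hybr]. right. apply (proj2 (HL_si HD (zero_supp HD) Hx)). left; reflexivity.
        -- unfold tle; cbn [tlt hybr]. right. apply (proj2 (HL_si HE (zero_supp HE) Hy)). left; reflexivity.
        -- left. split; [exact (zero_supp HD)|]. split; [exact (zero_supp HE)|exact Hinc].
      * destruct (down_root Hdn) as [r Hr].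
        destruct (classic (tlt (gtree E) y r)) as [Lyr|Hn].
        -- exfalso. apply Hnyx. right. apply (proj2 (HL_iid HE HD (not_eq_sym Hne) Hy Hx)). eauto.
        -- exists r, y. split; [|split].
           ++ unfold tle; cbn [tlt hybr]. right. exact (proj2 (HL_si HD (max_supp HE (proj1 Hr)) Hx) (proj2 Hr)).
           ++ left; reflexivity.
           ++ right. exists E. split; [exact HE|]. split; [exact (proj1 (proj1 Hr))|]. split; [exact (proj1 Hy)|].
              apply incomp_sym'. exact (incomp_im HE Hy (proj1 Hr) Hn).
      * destruct (down_root Hdn) as [r Hr].
        destruct (classic (tlt (gtree D) x r)) as [Lxr|Hn].
        -- exfalso. apply Hnxy. right. apply (proj2 (HL_iid HD HE Hne Hx Hy)). eauto.
        -- exists x, r. split; [|split].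
           ++ left; reflexivity.
           ++ unfold tle; cbn [tlt hybr]. right. exact (proj2 (HL_si HE (max_supp HD (proj1 Hr)) Hy) (proj2 Hr)).
           ++ right. exists D. split; [exact HD|]. split; [exact (proj1 Hx)|]. split; [exact (proj1 (proj1 Hr))|].
              exact (incomp_im HD Hx (proj1 Hr) Hn).
Qed.

Lemma c_main {r} : is_least T r -> is_least (hybr T gamma) r /\ sp r.
Proof. intros [Hrn Hl].
  assert (Hrs : sp r).
  { split; [exact Hrn|]. intros G HG [_ [Lt _]].
    destruct (classic (gzero G = r)) as [e|n].
    - rewrite e in Lt. exact (t_irr hT Lt).
    - exact (t_asym hT Lt (Hl _ (g_zero_T HG) n)). }
  split; [|exact Hrs]. split; [left; exact Hrs|].
  intros v Hv Hne. cbn [tlt hybr nodes] in *.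
  destruct (HN_cases Hv) as [Hvs|[E [HE Hvi]]].
  - apply (proj2 (HL_ss Hrs Hvs)). exact (Hl v (supp_nodes Hvs) Hne).
  - apply (proj2 (HL_si HE Hrs Hvi)).
    destruct (classic (r = gzero E)) as [e|n]; [left; exact e| right].
    apply Hl; [exact (g_zero_T HE)| intro e; apply n; symmetry; exact e]. Qed.

Lemma above_zero {G m} : gamma G -> sp m -> tle T m (gzero G) -> exists w, HL m w.
Proof. intros HG Hm Hle. destruct (g_other HG) as [w [Hw Hne]].
  destruct (g_class Hw) as [e|[Hwi|Hwm]].
  - exfalso; exact (Hne e).
  - exists w. exact (proj2 (HL_si HG Hm Hwi) Hle).
  - exists w. apply (proj2 (HL_ss Hm (max_supp HG Hwm))). exact (t_le_lt hT Hle (proj2 (g_max_T HG Hwm))).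
Qed.

Lemma d_main : (forall m, ~ maxnode T m) -> forall m, ~ maxnode (hybr T gamma) m.
Proof. intros Hno m [Hm Hns]. cbn [nodes tlt hybr] in Hm, Hns. apply Hns.
  destruct (HN_cases Hm) as [Hms|[G [HG Hmi]]].
  - destruct (classic (exists v, tlt T m v)) as [[v Lv]|Hn]; [|exfalso; exact (Hno m (conj (supp_nodes Hms) Hn))].
    destruct (classic (sp v)) as [Hv|Hv].
    + exists v. exact (proj2 (HL_ss Hms Hv) Lv).
    + destruct (not_supp_expl (proj2 (t_nodes hT Lv)) Hv) as [G [HG [_ [L0v Hnd]]]].
      destruct (t_cmp hT Lv L0v) as [e|[Lm0|L0m]].
      * apply (above_zero HG Hms). left; exact e.
      * apply (above_zero HG Hms). right; exact Lm0.
      * exfalso. destruct (down_root (supp_above HG Hms L0m)) as [r Hr]. apply Hnd.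
        split; [exact (proj2 (t_nodes hT Lv))| exists r; split; [exact (proj1 Hr)| right; exact (t_le_lt hT (proj2 Hr) Lv)]].
  - destruct (classic (exists v, tlt (gtree G) m v)) as [[v Lv]|Hn];
      [|exfalso; apply (proj2 (proj2 Hmi)); split; [exact (proj1 Hmi)| exact Hn]].
    pose proof (g_tree HG) as hG.
    destruct (g_class (proj2 (t_nodes hG Lv))) as [e|[Hvi|Hvm]].
    + subst v. exfalso. exact (t_asym hG (impl_zero HG Hmi) Lv).
    + exists v. exact (proj2 (HL_ii HG Hmi Hvi) Lv).
    + exists v. apply (proj2 (HL_is HG Hmi (max_supp HG Hvm))). exists v. split; [exact (root_self Hvm)| exact Lv].
Qed.

Lemma e_main (K : Type) : branching T K -> (forall G, gamma G -> branching (gtree G) K) ->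
  branching (hybr T gamma) K.
Proof. intros bT bG x Hx Hnm. cbn [nodes hybr] in Hx.
  destruct (classic (exists G, gamma G /\ (x = gzero G \/ impl G x))) as [[G [HG Hor]]|Hno].
  - assert (Hsons : forall s, sons (hybr T gamma) x s <-> sons (gtree G) x s).
    { destruct Hor as [->|Hi]; intro s; [apply a1_zero| apply a1_impl]; auto. }
    assert (Hxn : nodes (gtree G) x) by (destruct Hor as [->|Hi]; [exact (proj1 (proj1 (proj2 (proj2 (g_graft HG)))))| exact (proj1 Hi)]).
    assert (Hxm : ~ maxnode (gtree G) x) by (destruct Hor as [->|Hi]; [exact (g_zero_not_max HG)| exact (proj2 (proj2 Hi))]).
    destruct (bG G HG x Hxn Hxm) as [f [Hinj Hsurj]]. exists f. split; [exact Hinj|].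
    intro s. rewrite Hsons. apply Hsurj.
  - assert (Hxs : sp x).
    { destruct (HN_cases Hx) as [H|[G [HG Hi]]]; [exact H| exfalso; apply Hno; eauto]. }
    assert (Hz : forall G, gamma G -> x <> gzero G) by (intros G HG e; apply Hno; eauto).
    assert (Hxm : ~ maxnode T x).
    { intros [Hxn Hnx]. apply Hnm. split; [exact Hx|]. intros [v Hv]. cbn [tlt hybr] in Hv.
      destruct (HN_cases (proj2 (HL_nodes Hv))) as [Hvs|[E [HE Hvi]]].
      - apply Hnx. exists v. exact (proj1 (HL_ss Hxs Hvs) Hv).
      - destruct (proj1 (HL_si HE Hxs Hvi) Hv) as [e|l]; [exact (Hz E HE e)| apply Hnx; eauto]. }
    destruct (bT x (supp_nodes Hxs) Hxm) as [f [Hinj Hsurj]]. exists f. split; [exact Hinj|].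
    intro s. rewrite (a2 Hxs Hz). apply Hsurj.
Qed.

Lemma list_choice {A B : Type} (l : list A) (P : A -> list B -> Prop) :
  (forall (a : A), In a l -> exists lb, P a lb) ->
  exists L : list B, forall (a : A), In a l -> exists lb, P a lb /\ incl lb L.
Proof. induction l as [|a0 l IH]; intros H.
  - exists nil. intros a [].
  - destruct (H a0 (or_introl eq_refl)) as [lb Hlb].
    destruct (IH (fun (a : A) Ha => H a (or_intror Ha))) as [L HL].
    exists (lb ++ L). intros a [<-|Hin].
    + exists lb. split; [exact Hlb| apply incl_appl; apply incl_refl].
    + destruct (HL a Hin) as [lb' [Hp Hi]]. exists lb'. split; [exact Hp| apply incl_appr; exact Hi].
Qed.

Lemma graft_preds : height_le_omega T -> (forall G, gamma G -> height_le_omega (gtree G)) ->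
  forall y, nodes T y -> exists L, forall D v r, gamma D -> is_root T y (mx D) r -> tlt (gtree D) v r -> In v L.
Proof. intros hTh hGh y Hy. destruct (hTh y Hy) as [lT HlT].
  destruct (list_choice lT (fun a lb => forall D r v, gamma D -> gzero D = a -> is_root T y (mx D) r ->
      tlt (gtree D) v r -> In v lb)) as [L HL].
  - intros a _.
    destruct (classic (exists D r, gamma D /\ gzero D = a /\ is_root T y (mx D) r)) as [[D [r [HD [Ha Hr]]]]|Hno].
    + destruct (hGh D HD r (proj1 (proj1 Hr))) as [lb Hlb]. exists lb.
      intros D' r' v HD' Ha' Hr' Lv.
      assert (D' = D) by (apply (zero_inj HD' HD); congruence). subst D'.
      rewrite (root_unique HD Hr' Hr) in Lv. exact (Hlb v Lv).
    + exists nil. intros D' r' v HD' Ha' Hr'. exfalso. apply Hno. eauto.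
  - exists L. intros D v r HD Hr Lv.
    pose proof (HlT _ (t_lt_le hT (root_gt_zero HD Hr) (proj2 Hr))) as Hin.
    destruct (HL _ Hin) as [lb [Hp Hi]]. apply Hi. exact (Hp D r v HD eq_refl Hr Lv).
Qed.

Lemma f_main : height_le_omega T -> (forall G, gamma G -> height_le_omega (gtree G)) ->
  height_le_omega (hybr T gamma).
Proof. intros hTh hGh x Hx. cbn [nodes hybr] in Hx.
  destruct (HN_cases Hx) as [Hxs|[G [HG Hxi]]].
  - destruct (hTh x (supp_nodes Hxs)) as [lT HlT].
    destruct (graft_preds hTh hGh x (supp_nodes Hxs)) as [L HL].
    exists (lT ++ L). intros v Hv. cbn [tlt hybr] in Hv.
    destruct (HN_cases (proj1 (HL_nodes Hv))) as [Hvs|[E [HE Hvi]]].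
    + apply in_or_app. left. apply HlT. exact (proj1 (HL_ss Hvs Hxs) Hv).
    + destruct (proj1 (HL_is HE Hvi Hxs) Hv) as [r [Hr Lv]].
      apply in_or_app. right. exact (HL E v r HE Hr Lv).
  - destruct (hTh (gzero G) (g_zero_T HG)) as [lT0 HlT0].
    destruct (hGh G HG x (proj1 Hxi)) as [lG HlG].
    destruct (graft_preds hTh hGh (gzero G) (g_zero_T HG)) as [L HL].
    exists ((gzero G :: lT0) ++ lG ++ L). intros v Hv. cbn [tlt hybr] in Hv.
    destruct (HN_cases (proj1 (HL_nodes Hv))) as [Hvs|[E [HE Hvi]]].
    + apply in_or_app. left. destruct (proj1 (HL_si HG Hvs Hxi) Hv) as [e|l].
      * left. symmetry. exact e.
      * right. exact (HlT0 v l).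
    + apply in_or_app. right. apply in_or_app.
      destruct (classic (E = G)) as [->|HEG].
      * left. exact (HlG v (proj1 (HL_ii HG Hvi Hxi) Hv)).
      * right. destruct (proj1 (HL_iid HE HG HEG Hvi Hxi) Hv) as [r [Hr Lv]]. exact (HL E v r HE Hr Lv).
Qed.

End Hyb.

Theorem mainTheorem8 (U : Type) (T : tree U) (gamma : graft U -> Prop)
  (hT : is_tree T) (hg : consistent T gamma) :
  let H := hybr T gamma in
  (* (a) *)
  (forall x, nodes H x ->
     (forall G, gamma G -> (x = gzero G \/ impl G x) ->
        forall s, sons H x s <-> sons (gtree G) x s) /\
     ((forall G, gamma G -> x <> gzero G /\ ~ impl G x) ->
        forall s, sons H x s <-> sons T x s)) /\
  (* (b) *)
  (forall x y, incomp H x y ->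
     exists x' y', tle H x' x /\ tle H y' y /\
       ((supp T gamma x' /\ supp T gamma y' /\ incomp T x' y') \/
        (exists G, gamma G /\ nodes (gtree G) x' /\ nodes (gtree G) y' /\
                   incomp (gtree G) x' y'))) /\
  (* (c) *)
  ((exists r, is_least T r) ->
     exists r, is_least H r /\ is_least T r /\ supp T gamma r) /\
  (* (d) *)
  ((forall m, ~ maxnode T m) -> forall m, ~ maxnode H m) /\
  (* (e) *)
  (forall K : Type, branching T K -> (forall G, gamma G -> branching (gtree G) K) ->
     branching H K) /\
  (* (f) *)
  (height_le_omega T -> (forall G, gamma G -> height_le_omega (gtree G)) ->
     height_le_omega H).
Proof.
  intros H. subst H. split; [|split; [|split; [|split; [|split]]]].
  - intros x Hx. split.
    + intros G HG [->|Hi] s; [exact (a1_zero hT hg HG) | exact (a1_impl hT hg HG Hi)].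
    + intros Hall s. cbn [nodes hybr] in Hx.
      destruct (HN_cases Hx) as [Hxs|[G [HG Hi]]].
      * exact (a2 hT hg Hxs (fun G HG => proj1 (Hall G HG))).
      * exfalso. exact (proj2 (Hall G HG) Hi).
  - intros x y Hi. exact (b_main hT hg Hi).
  - intros [r Hr]. exists r. destruct (c_main hT hg Hr) as [A B]. auto.
  - exact (d_main hT hg).
  - intros K bT bG. exact (e_main hT hg bT bG).
  - intros hTh hGh. exact (f_main hT hg hTh hGh).
Qed.
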